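(* Let $n$ be even and let $f,g:\mathbb{F}_2^n\to\mathbb{F}_2$ be bent functions with $g(\mathbf{x})=f(\mathbf{x}\oplus\mathbf{u})$ for all $\mathbf{x}$, for some $\mathbf{u}\in\mathbb{F}_2^n$. Then for all $\mathbf{x}\in\mathbb{F}_2^n$, $$(g\oplus s_2)(\mathbf{x})=\left(f\oplus s_2\oplus\mathbb{L}_{\mathbf{u}}\oplus s_2(\mathbf{u})\right)(\mathbf{x}\oplus\mathbf{u}),$$ (where $g\oplus s_2$ and $f\oplus s_2\oplus\mathbb{L}_{\mathbf{u}}\oplus s_2(\mathbf{u})$ are negabent functions), and the duals satisfy $\tilde g(\mathbf{x})=\tilde f(\mathbf{x})\oplus\mathbf{u}\cdot\mathbf{x}$ for all $\mathbf{x}$.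
   Context: $\mathbf{x}\cdot\mathbf{y}=\bigoplus_ix_iy_i$. $s_2(\mathbf{x})=\bigoplus_{1\le i<j\le n}x_ix_j$ is the quadratic symmetric Boolean function. $\mathbb{L}_{\mathbf{u}}(\mathbf{x})=\bigoplus_{i=1}^n x_i\left(\bigoplus_{j\neq i}u_j\right)$. Walsh–Hadamard transform $W_f(\boldsymbol{\omega})=2^{-n/2}\sum_{\mathbf{x}}(-1)^{f(\mathbf{x})\oplus\mathbf{x}\cdot\boldsymbol{\omega}}$; $f$ is bent if $W_f(\boldsymbol{\omega})=\pm1$ for all $\boldsymbol{\omega}$, and its dual $\tilde f$ satisfies $(-1)^{\tilde f(\mathbf{x})}=W_f(\mathbf{x})$. Nega-Hadamard transform $N_f(\boldsymbol{\omega})=2^{-n/2}\sum_{\mathbf{x}}(-1)^{f(\mathbf{x})\oplus\mathbf{x}\cdot\boldsymbol{\omega}}i^{wt(\mathbf{x})}$ ($wt$ = Hamming weight); $f$ is negabent if $|N_f(\boldsymbol{\omega})|=1$ for all $\boldsymbol{\omega}$. *)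

(* Defs.v *)
From HB Require Import structures.
From mathcomp Require Import all_boot all_order all_algebra all_field.
Set Implicit Arguments. Unset Strict Implicit. Unset Printing Implicit Defensive.
Import Order.TTheory GRing.Theory Num.Theory.
Local Open Scope ring_scope.

(* Vectors of F_2^n, with F_2 represented by bool and addition by xor (addb). *)
Definition vec (n : nat) := {ffun 'I_n -> bool}.

Definition xorv {n} (x y : vec n) : vec n := [ffun i => x i (+) y i].

Definition dotv {n} (x y : vec n) : bool := \big[addb/false]_(i < n) (x i && y i).

Definition s2 {n} (x : vec n) : bool :=
  \big[addb/false]_(i < n) \big[addb/false]_(j < n | (i < j)%N) (x i && x j).

Definition Lu {n} (u x : vec n) : bool :=
  \big[addb/false]_(i < n) (x i && \big[addb/false]_(j < n | j != i) u j).

Definition wt {n} (x : vec n) : nat := \sum_(i < n) (x i : nat).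

Definition sgn (b : bool) : algC := (-1) ^+ b.

Definition walsh {n} (f : vec n -> bool) (w : vec n) : algC :=
  (sqrtC 2%:R) ^- n * \sum_(x : vec n) sgn (f x (+) dotv x w).

Definition nega {n} (f : vec n -> bool) (w : vec n) : algC :=
  (sqrtC 2%:R) ^- n * \sum_(x : vec n) sgn (f x (+) dotv x w) * 'i ^+ wt x.

Definition bent {n} (f : vec n -> bool) : Prop :=
  forall w, walsh f w = 1 \/ walsh f w = -1.

Definition negabent {n} (f : vec n -> bool) : Prop :=
  forall w, `|nega f w| = 1.

Definition is_dual {n} (f ft : vec n -> bool) : Prop :=
  forall x, sgn (ft x) = walsh f x.

(* Main.v *)
Require Import Defs.
From mathcomp Require Import all_boot all_order all_algebra all_field.
From mathcomp Require Import ring zify.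
Set Implicit Arguments. Unset Strict Implicit. Unset Printing Implicit Defensive.
Import GRing.Theory Num.Theory.
Lemma tri (R : Type) (idx : R) (op : Monoid.com_law idx) n (F : 'I_n -> 'I_n -> R) :
  \big[op/idx]_(i < n) \big[op/idx]_(j < n | j != i) F i j =
  op (\big[op/idx]_(i < n) \big[op/idx]_(j < n | (i < j)%N) F i j)
     (\big[op/idx]_(i < n) \big[op/idx]_(j < n | (i < j)%N) F j i).
Proof.
rewrite [X in op _ X](exchange_big_dep xpredT) //= -big_split /=.
apply: eq_bigr => i _; rewrite (bigID (fun j : 'I_n => (i < j)%N)) /=.
apply: f_equal2; apply: eq_bigl => j.
  by rewrite -(inj_eq val_inj) /= neq_ltn; case: (ltngtP i j).
by rewrite -(inj_eq val_inj) /= neq_ltn; case: (ltngtP i j).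
Qed.

Lemma andb_bigxor (I : finType) (P : pred I) (b : bool) (F : I -> bool) :
  b && \big[addb/false]_(j | P j) F j = \big[addb/false]_(j | P j) (b && F j).
Proof. by case: b => //=; rewrite big1. Qed.

Lemma s2_xor n (y u : vec n) : s2 (xorv y u) = s2 y (+) s2 u (+) Lu u y.
Proof.
have -> : Lu u y = \big[addb/false]_(i < n) \big[addb/false]_(j < n | j != i) (y i && u j).
  by apply: eq_bigr => i _; rewrite andb_bigxor.
rewrite tri /s2 -!big_split /=.
apply: eq_bigr => i _.
rewrite -!big_split /=; apply: eq_bigr => j _; rewrite !ffunE.
by case: (y i); case: (u i); case: (y j); case: (u j).
Qed.
Local Open Scope ring_scope.

Definition ca : algC := (1 + 'i) / 2%:R.
Definition cb : algC := (1 - 'i) / 2%:R.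

Lemma two_neq0 : (2%:R : algC) != 0.
Proof. by rewrite pnatr_eq0. Qed.

Lemma ca_cb_add : ca + cb = 1.
Proof. rewrite /ca /cb; by field. Qed.
Lemma ca_cb_sub : ca - cb = 'i.
Proof. rewrite /ca /cb; by field. Qed.

Lemma sgnD a b : sgn (a (+) b) = sgn a * sgn b.
Proof. by case: a; case: b; rewrite /sgn /= ?expr0 ?expr1 ?mulr1 ?mul1r ?mulrNN ?mulr1. Qed.

Lemma sgn_inj a b : sgn a = sgn b -> a = b.
Proof.
case: a; case: b => //=; rewrite /sgn expr0 expr1 => /eqP;
  rewrite ?eqr_oppLR -addr_eq0 (_ : 1 + 1 = 2%:R) ?pnatr_eq0 //.
Qed.


Lemma sgnC k : sgn (odd 'C(k, 2)) * 'i ^+ k = if odd k then 'i else 1.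
Proof.
elim: k => [|k IH]; first by rewrite /sgn bin0n /= expr0 mulr1.
rewrite binS bin1 oddD sgnD exprSr mulrA -(mulrA (sgn _)) (mulrC (sgn (odd k))) mulrA IH /=.
by case: (odd k); rewrite /sgn /= ?expr0 ?expr1 ?mulr1 ?mul1r // mulrN1 mulNr -expr2 sqrCi opprK.
Qed.

Definition Pc n (x : vec n) : nat :=
  (\sum_(i < n) \sum_(j < n | (i < j)%N) (x i * x j))%N.

Lemma oddsum (I : finType) (P : pred I) (F : I -> nat) :
  odd (\sum_(i | P i) F i)%N = \big[addb/false]_(i | P i) odd (F i).
Proof. apply: (big_morph odd oddD). by []. Qed.

Lemma s2_odd n (x : vec n) : s2 x = odd (Pc x).
Proof.
rewrite /Pc oddsum; apply: eq_bigr => i _; rewrite oddsum; apply: eq_bigr => j _.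
by rewrite oddM !oddb.
Qed.

Lemma wt_sq n (x : vec n) : (wt x * wt x = wt x + (Pc x).*2)%N.
Proof.
rewrite /wt big_distrl /=.
have -> : (\sum_(i < n) (x i * \sum_(j < n) x j) = \sum_(i < n) \sum_(j < n) x i * x j)%N.
  by apply: eq_bigr => i _; rewrite big_distrr.
have -> : (\sum_(i < n) \sum_(j < n) x i * x j = \sum_(i < n) (x i : nat) + \sum_(i < n) \sum_(j < n | j != i) x i * x j)%N.
  rewrite -big_split /=; apply: eq_bigr => i _.
  by rewrite (bigD1 i) //= mulnb andbb.
rewrite (@tri _ 0%N addn n (fun i j : 'I_n => (x i * x j)%N)) /Pc -addnn; congr (_ + (_ + _))%N.
by apply: eq_bigr => i _; apply: eq_bigr => j _; rewrite mulnC.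
Qed.

Lemma cnt k P : (k * k = k + P.*2)%N -> P = 'C(k, 2).
Proof.
move=> h; rewrite bin2 -[P]doubleK; congr half.
rewrite -mul2n; case: k h => [|k] /= h; first by lia.
nia.
Qed.

Lemma term n (x : vec n) : sgn (s2 x) * 'i ^+ wt x = ca + cb * sgn (odd (wt x)).
Proof.
rewrite s2_odd (cnt (wt_sq x)) sgnC.
case: (odd (wt x)); rewrite /sgn /= ?expr0 ?expr1 ?mulr1 ?ca_cb_add //.
by rewrite mulrN1 ca_cb_sub.
Qed.

Definition ones n : vec n := [ffun _ => true].

Lemma dotvD n (x a b : vec n) : dotv x (xorv a b) = dotv x a (+) dotv x b.
Proof.
rewrite /dotv -big_split /=; apply: eq_bigr => i _; rewrite ffunE.
by case: (x i).
Qed.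

Lemma dotvC n (x y : vec n) : dotv x y = dotv y x.
Proof. by apply: eq_bigr => i _; rewrite andbC. Qed.

Lemma dotv_ones n (x : vec n) : dotv x (ones n) = odd (wt x).
Proof.
rewrite /wt oddsum; apply: eq_bigr => i _; by rewrite ffunE andbT oddb.
Qed.

Lemma nega_lin n (f : vec n -> bool) v c w :
  nega (fun x => f x (+) s2 x (+) dotv x v (+) c) w =
  sgn c * (ca * walsh f (xorv v w) + cb * walsh f (xorv (xorv v w) (ones n))).
Proof.
rewrite /nega /walsh.
have -> : \sum_(x : vec n) sgn (f x (+) s2 x (+) dotv x v (+) c (+) dotv x w) * 'i ^+ wt x
  = \sum_(x : vec n) (sgn c * (ca * sgn (f x (+) dotv x (xorv v w))
       + cb * sgn (f x (+) dotv x (xorv (xorv v w) (ones n))))).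
  apply: eq_bigr => x _.
  rewrite !dotvD !sgnD dotv_ones.
  transitivity (sgn c * sgn (f x) * sgn (dotv x v) * sgn (dotv x w) * (sgn (s2 x) * 'i ^+ wt x)); first by ring.
  rewrite term; ring.
rewrite -mulr_sumr big_split /= -!mulr_sumr; ring.
Qed.

Lemma normsgn b : `|sgn b| = 1.
Proof. by case: b; rewrite /sgn ?expr0 ?expr1 ?normrN1 ?normr1. Qed.

Lemma negabent_lin n (f : vec n -> bool) v c :
  bent f -> negabent (fun x => f x (+) s2 x (+) dotv x v (+) c).
Proof.
move=> hb w; rewrite nega_lin normrM normsgn mul1r.
case: (hb (xorv v w)) => ->; case: (hb (xorv (xorv v w) (ones n))) => ->.
- by rewrite !mulr1 ca_cb_add normr1.
- by rewrite !mulr1 mulrN1 ca_cb_sub normCi.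
- by rewrite !mulr1 mulrN1 addrC -opprB normrN ca_cb_sub normCi.
- by rewrite !mulrN1 -opprD ca_cb_add normrN1.
Qed.

Lemma xorvK n (x u : vec n) : xorv (xorv x u) u = x.
Proof. by apply/ffunP => i; rewrite !ffunE -addbA addbb addbF. Qed.

Lemma walsh_shift n (f g : vec n -> bool) u :
  (forall x, g x = f (xorv x u)) -> forall x, walsh g x = sgn (dotv u x) * walsh f x.
Proof.
move=> hg x; rewrite /walsh mulrCA; congr (_ * _); rewrite mulr_sumr.
rewrite (reindex (fun z => xorv z u)) /=; last by exists (fun z => xorv z u) => z _; rewrite xorvK.
apply: eq_bigr => z _; rewrite hg xorvK dotvC dotvD dotvC (dotvC x) !sgnD; ring.
Qed.

Lemma negabent_ext n (F G : vec n -> bool) : (forall x, F x = G x) -> negabent F -> negabent G.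
Proof.
move=> e h w; rewrite -(h w) /nega; congr (`|_ * _|); apply: eq_bigr => x _; by rewrite e.
Qed.

Definition lv n (u : vec n) : vec n := [ffun i => \big[addb/false]_(j < n | j != i) u j].

Lemma Lu_dot n (u x : vec n) : Lu u x = dotv x (lv u).
Proof. by apply: eq_bigr => i _; rewrite ffunE. Qed.

Theorem lemma3 (n : nat) (f g : vec n -> bool) (u : vec n) :
  ~~ odd n -> bent f -> bent g ->
  (forall x, g x = f (xorv x u)) ->
  [/\ (forall x, g x (+) s2 x =
                 f (xorv x u) (+) s2 (xorv x u) (+) Lu u (xorv x u) (+) s2 u),
      negabent (fun x => g x (+) s2 x),
      negabent (fun x => f x (+) s2 x (+) Lu u x (+) s2 u) &
      (forall ft gt : vec n -> bool, is_dual f ft -> is_dual g gt ->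
         forall x, gt x = ft x (+) dotv u x)].
Proof.
move=> _ bf bg hg; split.
- move=> x; rewrite hg.
  have -> : s2 x = s2 (xorv (xorv x u) u) by rewrite xorvK.
  rewrite s2_xor.
  by case: (f (xorv x u)); case: (s2 (xorv x u)); case: (s2 u); case: (Lu u (xorv x u)).
- apply: (negabent_ext _ (negabent_lin [ffun=> false] false bg)) => x.
  have -> : dotv x [ffun=> false] = false by apply: big1 => i _; rewrite ffunE andbF.
  by rewrite !addbF.
- apply: (negabent_ext _ (negabent_lin (lv u) (s2 u) bf)) => x.
  by rewrite Lu_dot.
- move=> ft gt hft hgt x; apply: sgn_inj.
  by rewrite sgnD hgt hft (walsh_shift hg) mulrC.
Qed.
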